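(* Let $(X_{s,t})$ be the INMA$(q_1,q_2)$ random field defined in the context, and let $k,l$ be integers with $0\le k\le q_1$, $0\le l\le q_2$. Then for all $(s,t)\in\mathbb{Z}^2$ and $u_1,u_2\in[-1,1]$, the bivariate pgf $\operatorname{pgf}(u_1,u_2;k,l):=\mathbb{E}\big(u_1^{X_{s,t}}u_2^{X_{s-k,t-l}}\big)$ equals $$\prod_{i=0}^{k-1}\prod_{j=0}^{q_2}\operatorname{pgf}_\varepsilon\big(1+\beta_{ij}(u_1-1)\big)\cdot\prod_{i=k}^{q_1}\prod_{j=0}^{l-1}\operatorname{pgf}_\varepsilon\big(1+\beta_{ij}(u_1-1)\big)$$ $$\cdot\prod_{i=q_1+1}^{q_1+k}\prod_{j=l}^{q_2+l}\operatorname{pgf}_\varepsilon\big(1+\beta_{i-k,j-l}(u_2-1)\big)\cdot\prod_{i=k}^{q_1}\prod_{j=q_2+1}^{q_2+l}\operatorname{pgf}_\varepsilon\big(1+\beta_{i-k,j-l}(u_2-1)\big)$$ $$\cdot\prod_{i=k}^{q_1}\prod_{j=l}^{q_2}\operatorname{pgf}_\varepsilon\Big(1+\beta_{ij}(u_1-1)+\beta_{i-k,j-l}(u_2-1)+p_{(i,j),(i-k,j-l)}\,(u_1-1)(u_2-1)\Big),$$ where empty products equal $1$. (For $k=l=0$ this reduces to the marginal pgf of $X_{s,t}$ evaluated at $u=u_1u_2$.)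
   Context: INMA$(q_1,q_2)$ random field: Fix $q_1,q_2\in\mathbb{N}_0$ with $q_1+q_2\ge 1$ and parameters $\beta_{ij}\in[0,1]$ for $0\le i\le q_1$, $0\le j\le q_2$; put $\beta_\bullet=\sum_{i=0}^{q_1}\sum_{j=0}^{q_2}\beta_{ij}$. Let $(\varepsilon_{s,t})_{s,t\in\mathbb{Z}}$ be i.i.d. random variables with values in $\mathbb{N}_0=\{0,1,2,\dots\}$, finite mean $\mu_\varepsilon$ and finite variance $\sigma_\varepsilon^2$, and let $\operatorname{pgf}_\varepsilon(u)=\mathbb{E}u^{\varepsilon_{s,t}}$. Let $\mathbf{Z}_{s,t;r}=(Z^{(i,j)}_{s,t;r})_{0\le i\le q_1,0\le j\le q_2}$, $s,t\in\mathbb{Z}$, $r\in\mathbb{N}$, be i.i.d. random vectors (distributed as a generic vector $\mathbf{Z}=(Z^{(i,j)})$), independent of $(\varepsilon_{s,t})$, whose components are Bernoulli with $\mathbb{P}(Z^{(i,j)}=1)=\beta_{ij}$; the components within one vector may be arbitrarily dependent. Write $p_{(i,j),(i',j')}:=\mathbb{P}(Z^{(i,j)}=1,\,Z^{(i',j')}=1)$. The binomial thinning of $\varepsilon_{s,t}$ executed at location $(s+i,t+j)$ is $\beta_{ij}\circ_{s+i,t+j}\varepsilon_{s,t}:=\sum_{r=1}^{\varepsilon_{s,t}}Z^{(i,j)}_{s,t;r}$ (empty sum $=0$). The field is $$X_{s,t}=\sum_{i=0}^{q_1}\sum_{j=0}^{q_2}\beta_{ij}\circ_{s,t}\varepsilon_{s-i,t-j}=\sum_{i=0}^{q_1}\sum_{j=0}^{q_2}\sum_{r=1}^{\varepsilon_{s-i,t-j}}Z^{(i,j)}_{s-i,t-j;r}.$$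 *)

(* Defs.v *)
From HB Require Import structures.
From mathcomp Require Import all_boot all_order all_algebra.
From mathcomp Require Import all_classical all_reals all_analysis.
Set Implicit Arguments. Unset Strict Implicit. Unset Printing Implicit Defensive.
Import Order.TTheory GRing.Theory Num.Theory.
Local Open Scope classical_set_scope.
Local Open Scope ring_scope.

Section INMA.
Context {R : realType} {d : measure_display} {Omega : measurableType d}.

Definition events_of {T : Type} (X : Omega -> T) : set (set Omega) :=
  [set X @^-1` B | B in [set: set T]].

Definition mutually_independent (P : probability Omega R) (I : eqType)
  (F : I -> set (set Omega)) : Prop :=
  forall (s : seq I) (A : I -> set Omega), uniq s ->
    (forall i, i \in s -> F i (A i)) ->
    fine (P (\big[setI/setT]_(i <- s) A i)) = \prod_(i <- s) fine (P (A i)).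

(* the thinning vector Z_{s,t;r} as a finite function on
   {0..q1} x {0..q2}; Z s t r w i j is the component Z^{(i,j)}_{s,t;r+1} *)
Definition Zvec (q1 q2 : nat) (Z : int -> int -> nat -> Omega -> nat -> nat -> bool)
  (s t : int) (r : nat) : Omega -> {ffun 'I_q1.+1 * 'I_q2.+1 -> bool} :=
  fun w => [ffun ij : 'I_q1.+1 * 'I_q2.+1 => Z s t r w ij.1 ij.2].

(* index set of the whole family: the innovations eps_{s,t} and the vectors Z_{s,t;r} *)
Definition inma_index := ((int * int) + (int * int * nat))%type.

Definition inma_events (q1 q2 : nat) (eps : int -> int -> Omega -> nat)
  (Z : int -> int -> nat -> Omega -> nat -> nat -> bool) (a : inma_index)
  : set (set Omega) :=
  match a with
  | inl (s, t) => events_of (eps s t)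
  | inr (s, t, r) => events_of (Zvec q1 q2 Z s t r)
  end.

Definition inma_X (q1 q2 : nat) (eps : int -> int -> Omega -> nat)
  (Z : int -> int -> nat -> Omega -> nat -> nat -> bool) (s t : int) (w : Omega) : nat :=
  \sum_(0 <= i < q1.+1) \sum_(0 <= j < q2.+1)
     \sum_(r < eps (s - i%:Z)%R (t - j%:Z)%R w)
        (Z (s - i%:Z)%R (t - j%:Z)%R r w i j : nat).

Definition pgf_eps (P : probability Omega R) (eps : int -> int -> Omega -> nat) (u : R) : R :=
  fine (\int[P]_w (u ^+ eps 0 0 w)%:E).

Definition pZ (P : probability Omega R) (Z : int -> int -> nat -> Omega -> nat -> nat -> bool)
  (i j i' j' : nat) : R :=
  fine (P [set w | Z 0 0 0%N w i j && Z 0 0 0%N w i' j']).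

End INMA.

(* Main.v *)
Require Import Defs.
From HB Require Import structures.
From mathcomp Require Import all_boot all_order all_algebra.
From mathcomp Require Import all_classical all_reals all_analysis.
From mathcomp Require Import ring lra zify measurable_realfun.
Import Order.TTheory GRing.Theory Num.Theory.
Import numFieldNormedType.Exports.
Local Open Scope classical_set_scope.
Local Open Scope ring_scope.

Section Lim.
Context {R : realType} {d : measure_display} {Omega : measurableType d}.
Context (P : probability Omega R).

Lemma dct1 (f_ : nat -> Omega -> R) (f : Omega -> R) :
  (forall N, measurable_fun setT (f_ N)) ->
  (forall w, \forall N \near \oo, f_ N w = f w) ->
  (forall N w, `|f_ N w| <= 1) ->
  P.-integrable setT (fun w => (f w)%:E) /\
  ((\int[P]_w (f_ N w)%:E)%E @[N --> \oo] --> (\int[P]_w (f w)%:E)%E).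
Proof.
move=> mf ev b.
have mf' : forall N, measurable_fun setT (fun w => (f_ N w)%:E).
  by move=> N; apply/measurable_EFinP.
have ff : forall w, setT w -> (fun N => (f_ N w)%:E) @ \oo --> (f w)%:E.
  move=> w _; apply: cvg_near_cst; move: (ev w); apply: filterS => N -> //.
have fing : forall w, setT w -> (cst 1%E : Omega -> \bar R) w \is a fin_num by [].
have ig : P.-integrable setT (cst 1%E : Omega -> \bar R).
  exact: (@finite_measure_integrable_cst _ _ _ P setT 1 measurableT).
have ab : forall N w, setT w -> (`|(f_ N w)%:E| <= (cst 1%E : Omega -> \bar R) w)%E.
  by move=> N w _; rewrite /= lee_fin b.
split.
  exact: (lebesgue_integral_dominated_convergence.dominated_integrable measurableT
     (fun N w => (f_ N w)%:E) (fun w => (f w)%:E) (cst 1%E) mf' ff ig ab).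
exact: (dominated_cvg measurableT mf' ff fing ig ab).
Qed.

End Lim.

Section Main.
Context {R : realType} {d : measure_display} {Omega : measurableType d}.
Context (P : probability Omega R) (q1 q2 : nat) (eps : int -> int -> Omega -> nat)
  (Z : int -> int -> nat -> Omega -> nat -> nat -> bool).
Context (Hmeps : forall s t (B : set nat), measurable (eps s t @^-1` B))
  (HmZ : forall s t r (B : set {ffun 'I_q1.+1 * 'I_q2.+1 -> bool}),
      measurable (Zvec q1 q2 Z s t r @^-1` B))
  (Heps : forall s t (B : set nat), P (eps s t @^-1` B) = P (eps 0 0 @^-1` B))
  (HZd : forall s t r (B : set {ffun 'I_q1.+1 * 'I_q2.+1 -> bool}),
      P (Zvec q1 q2 Z s t r @^-1` B) = P (Zvec q1 q2 Z 0 0 0 @^-1` B))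
  (Hind : mutually_independent P (inma_events q1 q2 eps Z)).

Let F := inma_events q1 q2 eps Z.

Lemma HT a : F a setT.
Proof. by case: a => [[x y]|[[x y] r]]; exists setT. Qed.

Lemma HI a A B : F a A -> F a B -> F a (A `&` B).
Proof.
by case: a => [[x y]|[[x y] r]] [B1 _ <-] [B2 _ <-]; exists (B1 `&` B2);
  rewrite ?preimage_setI.
Qed.

Lemma Hm a A : F a A -> measurable A.
Proof. by case: a => [[x y]|[[x y] r]] [B _ <-]. Qed.

Definition cyl := (R * (inma_index -> set Omega))%type.
Definition cylset (G : seq inma_index) (A : inma_index -> set Omega) : set Omega :=
  \big[setI/setT]_(a <- G) A a.
Definition evl G (l : seq cyl) (w : Omega) : R :=
  \sum_(x <- l) x.1 * \1_(cylset G x.2) w.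
Definition Exl G (l : seq cyl) : R :=
  \sum_(x <- l) x.1 * \prod_(a <- G) fine (P (x.2 a)).
Definition okl (l : seq cyl) := forall x, List.In x l -> forall a, F a (x.2 a).
Definition suppl (S : pred inma_index) (l : seq cyl) :=
  forall x, List.In x l -> forall a, ~~ S a -> x.2 a = setT.
Definition mull (l1 l2 : seq cyl) : seq cyl :=
  [seq (x.1 * y.1, fun a => x.2 a `&` y.2 a) | x <- l1, y <- l2].
Definition unitl : seq cyl := [:: (1, fun _ => setT)].

Lemma eq_sum_In (T : Type) (l : seq T) (f g : T -> R) :
  (forall x, List.In x l -> f x = g x) -> \sum_(x <- l) f x = \sum_(x <- l) g x.
Proof.
elim: l => [|x l IH] H; first by rewrite !big_nil.
rewrite !big_cons H /=; last by left.
by rewrite IH // => y Hy; apply: H; right.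
Qed.

Lemma In_allpairs (T1 T2 T : Type) (f : T1 -> T2 -> T) l1 l2 z :
  List.In z [seq f x y | x <- l1, y <- l2] ->
  exists x y, [/\ List.In x l1, List.In y l2 & z = f x y].
Proof.
elim: l1 => [|x l1 IH] //= H0.
have [H|H] := List.in_app_or _ _ _ H0.
  move: H => /List.in_map_iff [y [<- Hy]]; exists x, y; split => //; by left.
have [x' [y' [H1 H2 H3]]] := IH H; exists x', y'; split => //; by right.
Qed.

Lemma cylsetI G A B : cylset G (fun a => A a `&` B a) = cylset G A `&` cylset G B.
Proof.
rewrite /cylset; elim: G => [|a G IH]; first by rewrite !big_nil setIT.
by rewrite !big_cons IH setIACA.
Qed.

Lemma cylsetT G : cylset G (fun _ => setT) = setT.
Proof. by rewrite /cylset big1. Qed.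

Lemma evl_mull G l1 l2 w : evl G (mull l1 l2) w = evl G l1 w * evl G l2 w.
Proof.
rewrite /evl /mull big_allpairs_dep /= mulr_suml; apply: eq_bigr => x _.
rewrite mulr_sumr; apply: eq_bigr => y _ /=.
rewrite cylsetI indicI /=; ring.
Qed.

Lemma evl_cat G l1 l2 w : evl G (l1 ++ l2) w = evl G l1 w + evl G l2 w.
Proof. by rewrite /evl big_cat. Qed.

Lemma Exl_cat G l1 l2 : Exl G (l1 ++ l2) = Exl G l1 + Exl G l2.
Proof. by rewrite /Exl big_cat. Qed.

Lemma evl_unit G w : evl G unitl w = 1.
Proof. by rewrite /evl big_seq1 /= cylsetT indicE mem_set // mul1r. Qed.

Lemma fineP1 : fine (P setT) = 1.
Proof. by rewrite probability_setT. Qed.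

Lemma Exl_unit G : Exl G unitl = 1.
Proof. by rewrite /Exl big_seq1 /= big1 ?mul1r // => a _; rewrite fineP1. Qed.

Lemma Exl_mull G (S1 S2 : pred inma_index) l1 l2 :
  suppl S1 l1 -> suppl S2 l2 -> (forall a, ~~ (S1 a && S2 a)) ->
  Exl G (mull l1 l2) = Exl G l1 * Exl G l2.
Proof.
move=> H1 H2 H12.
rewrite /Exl /mull big_allpairs_dep /= mulr_suml; apply: eq_sum_In => x Hx.
rewrite mulr_sumr; apply: eq_sum_In => y Hy /=.
suff -> : \prod_(a <- G) fine (P (x.2 a `&` y.2 a)) =
   (\prod_(a <- G) fine (P (x.2 a))) * \prod_(a <- G) fine (P (y.2 a)) by ring.
rewrite -big_split /=; apply: eq_bigr => a _.
have := H12 a; case S1a : (S1 a) => /= S2a.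
  by rewrite (H2 y Hy a S2a) setIT fineP1 mulr1.
by rewrite (H1 x Hx a (negbT S1a)) setTI fineP1 mul1r.
Qed.

Lemma okl_mull l1 l2 : okl l1 -> okl l2 -> okl (mull l1 l2).
Proof.
move=> H1 H2 z Hz; have [x [y [Hx Hy ->]]] := @In_allpairs _ _ _ _ _ _ _ Hz => a /=.
by apply: HI; [apply: H1|apply: H2].
Qed.

Lemma suppl_mull S l1 l2 : suppl S l1 -> suppl S l2 -> suppl S (mull l1 l2).
Proof.
move=> H1 H2 z Hz; have [x [y [Hx Hy ->]]] := @In_allpairs _ _ _ _ _ _ _ Hz => a Sa /=.
by rewrite (H1 x Hx a Sa) (H2 y Hy a Sa) setIT.
Qed.

Lemma okl_cat l1 l2 : okl l1 -> okl l2 -> okl (l1 ++ l2).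
Proof. by move=> H1 H2 x H0; have [H|H] := List.in_app_or _ _ _ H0; [apply: H1|apply: H2]. Qed.

Lemma suppl_cat S l1 l2 : suppl S l1 -> suppl S l2 -> suppl S (l1 ++ l2).
Proof. by move=> H1 H2 x H0; have [H|H] := List.in_app_or _ _ _ H0; [apply: H1|apply: H2]. Qed.

Lemma okl_unit : okl unitl.
Proof. by move=> x [<-|//] a; exact: HT. Qed.

Lemma suppl_unit S : suppl S unitl.
Proof. by move=> x [<-|//]. Qed.

Lemma suppl_sub (S S' : pred inma_index) l : (forall a, S a -> S' a) -> suppl S l -> suppl S' l.
Proof.
move=> HS H x Hx a Sa; apply: H => //; apply/negP => /HS; exact/negP.
Qed.

Lemma cylset_meas G A : (forall a, F a (A a)) -> measurable (cylset G A).
Proof.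
move=> HA; rewrite /cylset; elim: G => [|a G IH]; first by rewrite big_nil.
by rewrite big_cons; apply: measurableI => //; apply: Hm.
Qed.

Lemma evl_meas G l : okl l -> measurable_fun setT (evl G l).
Proof.
rewrite /evl; elim: l => [|x l IH] H.
  by under eq_fun do rewrite big_nil; exact: measurable_cst.
under eq_fun do rewrite big_cons.
apply: measurable_funD; last by apply: IH => y Hy; apply: H; right.
apply: measurable_funM; first exact: measurable_cst.
apply: measurable_indic; apply: cylset_meas; apply: H; by left.
Qed.

Lemma evl_int G l : okl l -> P.-integrable setT (fun w => (evl G l w)%:E).
Proof.
rewrite /evl; elim: l => [|x l IH] H.
  by under eq_fun do rewrite big_nil; exact: integrable0.
have Hx : forall a, F a (x.2 a) by apply: H; left.
have Hl : okl l by move=> y Hy; apply: H; right.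
under eq_fun do rewrite big_cons EFinD EFinM.
apply: integrableD => //; last exact: IH.
apply: integrableZl => //; apply: integrable_indic; exact: cylset_meas.
Qed.

Lemma bridge G l : uniq G -> okl l ->
  (\int[P]_w (evl G l w)%:E = (Exl G l)%:E)%E.
Proof.
move=> uG; rewrite /evl /Exl; elim: l => [|x l IH] H.
  by under eq_integral do rewrite big_nil; rewrite integral0 big_nil.
have Hx : forall a, F a (x.2 a) by apply: H; left.
have Hl : okl l by move=> y Hy; apply: H; right.
under eq_integral do rewrite big_cons EFinD EFinM.
rewrite integralD //; last 2 first.
- apply: integrableZl => //; apply: integrable_indic; exact: cylset_meas.
- exact: (evl_int G l Hl).
rewrite IH // big_cons EFinD; congr (_ + _)%E.
rewrite integralZl //; last first.
  apply: integrable_indic; exact: cylset_meas.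
rewrite integral_indic //; last exact: cylset_meas.
rewrite setIT EFinM; congr (_ * _)%E.
rewrite -(Hind G x.2 uG (fun a _ => Hx a)) fineK //.
by rewrite fin_num_measure //; exact: cylset_meas.
Qed.


Context (u1 u2 : R) (Hu1 : -1 <= u1 <= 1) (Hu2 : -1 <= u2 <= 1).

Definition at1 (a0 : inma_index) (B : set Omega) : inma_index -> set Omega :=
  fun a => if a == a0 then B else setT.

Lemma at1_ok a0 B : F a0 B -> forall a, F a (at1 a0 B a).
Proof. by move=> HB a; rewrite /at1; case: eqP => [->//|_]; exact: HT. Qed.

Lemma supp_loc (a0 : inma_index) l :
  suppl (pred1 a0) l -> forall G, uniq G -> a0 \in G ->
  (forall w, evl G l w = \sum_(x <- l) x.1 * \1_(x.2 a0) w) /\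
  Exl G l = \sum_(x <- l) x.1 * fine (P (x.2 a0)).
Proof.
move=> Hs G uG aG; split; [move=> w|]; apply: eq_sum_In => x Hx; congr (_ * _).
  rewrite /cylset (bigD1_seq a0) //= big1 ?setIT // => a /negbTE Ha.
  by apply: Hs => //=; rewrite Ha.
rewrite (bigD1_seq a0) //= big1 ?mulr1 // => a /negbTE Ha.
have -> : x.2 a = setT by apply: Hs => //=; rewrite Ha.
exact: fineP1.
Qed.

Lemma suppl_at1 a0 c B : suppl (pred1 a0) [:: (c, at1 a0 B)].
Proof. by move=> x [<-|//] a /= /negbTE Ha; rewrite /at1 Ha. Qed.

Lemma okl_at1 a0 c B : F a0 B -> okl [:: (c, at1 a0 B)].
Proof. by move=> HB x [<-|//]; exact: at1_ok. Qed.

Definition bset (o : option (nat * nat)) : set {ffun 'I_q1.+1 * 'I_q2.+1 -> bool} :=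
  match o with Some (i, j) => [set f : {ffun _ -> bool} | f (inord i, inord j)] | None => set0 end.
Definition zset x y r o := Zvec q1 q2 Z x y r @^-1` bset o.
Definition zind x y r o (w : Omega) : bool :=
  match o with Some (i, j) => Z x y r w i j | None => false end.
Definition okopt (o : option (nat * nat)) : bool :=
  match o with Some (i, j) => (i <= q1)%N && (j <= q2)%N | None => true end.

Lemma zsetE x y r o w : okopt o -> zset x y r o w <-> zind x y r o w.
Proof.
case: o => [[i j] /andP [Hi Hj]|] /=; last by split.
by rewrite /zset /= /Zvec ffunE /= !inordK.
Qed.

Lemma indic_zset x y r o w : okopt o -> \1_(zset x y r o) w = (zind x y r o w)%:R :> R.
Proof.
move=> Ho; rewrite indicE; case Hz: (zind x y r o w).
  by rewrite mem_set // zsetE // Hz.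
by rewrite memNset // zsetE // Hz.
Qed.

Lemma F_zset x y r o : F (inr (x, y, r)) (zset x y r o).
Proof. by exists (bset o). Qed.

Definition bern (u : R) x y r o : seq cyl :=
  [:: (1, fun _ => setT); (u - 1, at1 (inr (x, y, r)) (zset x y r o))].

Lemma suppl_bern u x y r o : suppl (pred1 (inr (x, y, r))) (bern u x y r o).
Proof.
move=> z [<-|[<-|//]] a /= /negbTE Ha //; by rewrite /at1 Ha.
Qed.

Lemma okl_bern u x y r o : okl (bern u x y r o).
Proof.
move=> z [<-|[<-|//]] a /=; [exact: HT|exact/at1_ok/F_zset].
Qed.

Lemma evl_bern G u x y r o w : uniq G -> inr (x, y, r) \in G -> okopt o ->
  evl G (bern u x y r o) w = u ^+ zind x y r o w.
Proof.
move=> uG aG Ho; have [-> _] := @supp_loc _ _ (suppl_bern u x y r o) G uG aG.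
rewrite !big_cons big_nil /= /at1 eqxx indic_zset // indicE mem_set //.
by case: (zind x y r o w); rewrite /= ?expr1 ?expr0; ring.
Qed.

Definition gam x y r o1 o2 := mull (bern u1 x y r o1) (bern u2 x y r o2).

Definition pr (A : set Omega) := fine (P A).

Definition mval o1 o2 := 1 + (u2 - 1) * pr (zset 0 0 0 o2) + (u1 - 1) * pr (zset 0 0 0 o1)
  + (u1 - 1) * (u2 - 1) * pr (zset 0 0 0 o1 `&` zset 0 0 0 o2).

Lemma suppl_gam x y r o1 o2 : suppl (pred1 (inr (x, y, r))) (gam x y r o1 o2).
Proof. by apply: suppl_mull; exact: suppl_bern. Qed.

Lemma okl_gam x y r o1 o2 : okl (gam x y r o1 o2).
Proof. by apply: okl_mull; exact: okl_bern. Qed.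

Lemma evl_gam G x y r o1 o2 w : uniq G -> inr (x, y, r) \in G -> okopt o1 -> okopt o2 ->
  evl G (gam x y r o1 o2) w = u1 ^+ zind x y r o1 w * u2 ^+ zind x y r o2 w.
Proof. by move=> *; rewrite evl_mull !evl_bern. Qed.

Lemma pr_shift x y r o1 o2 :
  pr (zset x y r o1 `&` zset x y r o2) = pr (zset 0 0 0 o1 `&` zset 0 0 0 o2).
Proof. by rewrite /pr /zset -preimage_setI HZd preimage_setI. Qed.

Lemma pr_shift1 x y r o : pr (zset x y r o) = pr (zset 0 0 0 o).
Proof. by rewrite /pr /zset HZd. Qed.

Lemma Exl_gam G x y r o1 o2 : uniq G -> inr (x, y, r) \in G ->
  Exl G (gam x y r o1 o2) = mval o1 o2.
Proof.
move=> uG aG; have [_ ->] := @supp_loc _ _ (suppl_gam x y r o1 o2) G uG aG.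
rewrite /gam /mull /= !big_cons big_nil /= /at1 eqxx !setIT !setTI fineP1.
have E1 := pr_shift x y r o1 o2; have E2 := pr_shift1 x y r o1.
have E3 := pr_shift1 x y r o2; rewrite /pr in E1 E2 E3.
rewrite E1 E2 E3 /mval /pr; ring.
Qed.

Fixpoint powl (x y : int) (o1 o2 : option (nat * nat)) (n : nat) {struct n} : seq cyl :=
  match n with 0 => unitl | n'.+1 => mull (powl x y o1 o2 n') (gam x y n' o1 o2) end.

Definition rpred (L : int * int) (n : nat) : pred inma_index :=
  fun a => match a with inr (x', y', r) => ((x', y') == L) && (r < n)%N | inl _ => false end.

Lemma suppl_powl x y o1 o2 n : suppl (rpred (x, y) n) (powl x y o1 o2 n).
Proof.
elim: n => [|n IH] /=; first exact: suppl_unit.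
apply: suppl_mull.
  apply: (suppl_sub _ _ _ _ IH) => -[//|[[x' y'] r]] /= /andP [-> Hr] /=; exact: ltnW.
apply: (suppl_sub _ _ _ _ (suppl_gam x y n o1 o2)) => a /eqP -> /=.
by rewrite eqxx ltnSn.
Qed.

Lemma okl_powl x y o1 o2 n : okl (powl x y o1 o2 n).
Proof.
elim: n => [|n IH] /=; first exact: okl_unit.
by apply: okl_mull => //; exact: okl_gam.
Qed.

Lemma Exl_powl G x y o1 o2 n : uniq G -> (forall r, (r < n)%N -> inr (x, y, r) \in G) ->
  Exl G (powl x y o1 o2 n) = mval o1 o2 ^+ n.
Proof.
move=> uG; elim: n => [|n IH] HG /=; first by rewrite Exl_unit expr0.
rewrite (@Exl_mull G (rpred (x, y) n) (pred1 (inr (x, y, n)))).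
- rewrite IH; last by move=> r Hr; apply: HG; exact: ltnW.
  by rewrite Exl_gam ?exprSr //; apply: HG.
- exact: suppl_powl.
- exact: suppl_gam.
move=> [//|[[x' y'] r]] /=; apply/negP => /andP [/andP [_ Hr] /eqP [_ _ Hrn]].
by rewrite Hrn ltnn in Hr.
Qed.

Lemma evl_powl G x y o1 o2 n w : uniq G ->
  (forall r, (r < n)%N -> inr (x, y, r) \in G) -> okopt o1 -> okopt o2 ->
  evl G (powl x y o1 o2 n) w =
  \prod_(0 <= r < n) (u1 ^+ zind x y r o1 w * u2 ^+ zind x y r o2 w).
Proof.
move=> uG + H1 H2; elim: n => [|n IH] HG /=; first by rewrite evl_unit big_geq.
rewrite evl_mull IH; last by move=> r Hr; apply: HG; exact: ltnW.
by rewrite evl_gam ?big_nat_recr //; apply: HG.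
Qed.

Definition epsc x y n : seq cyl := [:: (1, at1 (inl (x, y)) (eps x y @^-1` [set n]))].

Lemma F_eps x y n : F (inl (x, y)) (eps x y @^-1` [set n]).
Proof. by exists [set n]. Qed.

Definition repL x y o1 o2 N : seq cyl :=
  flatten [seq mull (epsc x y n) (powl x y o1 o2 n) | n <- iota 0 N.+1].

Lemma evl_flat G (f : nat -> seq cyl) s w :
  evl G (flatten [seq f n | n <- s]) w = \sum_(n <- s) evl G (f n) w.
Proof.
elim: s => [|n s IH] /=; first by rewrite big_nil /evl big_nil.
by rewrite evl_cat IH big_cons.
Qed.

Lemma Exl_flat G (f : nat -> seq cyl) s :
  Exl G (flatten [seq f n | n <- s]) = \sum_(n <- s) Exl G (f n).
Proof.
elim: s => [|n s IH] /=; first by rewrite big_nil /Exl big_nil.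
by rewrite Exl_cat IH big_cons.
Qed.

Lemma okl_flat (f : nat -> seq cyl) s :
  (forall n, okl (f n)) -> okl (flatten [seq f n | n <- s]).
Proof.
move=> H; elim: s => [|n s IH] /=; first by move=> ? [].
exact: okl_cat.
Qed.

Lemma suppl_flat S (f : nat -> seq cyl) s :
  (forall n, suppl S (f n)) -> suppl S (flatten [seq f n | n <- s]).
Proof.
move=> H; elim: s => [|n s IH] /=; first by move=> ? [].
exact: suppl_cat.
Qed.

Definition TN (m : R) (N : nat) : R :=
  \sum_(n <- iota 0 N.+1) pr (eps 0 0 @^-1` [set n]) * m ^+ n.

Definition loc (a : inma_index) : int * int :=
  match a with inl L => L | inr (x, y, _) => (x, y) end.

Lemma suppl_epsc x y n : suppl (pred1 (inl (x, y))) (epsc x y n).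
Proof. exact: suppl_at1. Qed.

Lemma okl_epsc x y n : okl (epsc x y n).
Proof. apply: okl_at1; exact: F_eps. Qed.

Lemma suppl_repL x y o1 o2 N : suppl (fun a => loc a == (x, y)) (repL x y o1 o2 N).
Proof.
apply: suppl_flat => n; apply: suppl_mull.
  apply: (suppl_sub _ _ _ _ (suppl_epsc x y n)) => a /eqP -> /=; exact: eqxx.
apply: (suppl_sub _ _ _ _ (suppl_powl x y o1 o2 n)) => -[//|[[x' y'] r]] /= /andP [] //.
Qed.

Lemma okl_repL x y o1 o2 N : okl (repL x y o1 o2 N).
Proof.
apply: okl_flat => n; apply: okl_mull; [exact: okl_epsc|exact: okl_powl].
Qed.

Lemma Exl_epsc G x y n : uniq G -> inl (x, y) \in G ->
  Exl G (epsc x y n) = pr (eps 0 0 @^-1` [set n]).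
Proof.
move=> uG aG; have [_ ->] := @supp_loc _ _ (suppl_epsc x y n) G uG aG.
by rewrite big_seq1 /= /at1 eqxx mul1r /pr Heps.
Qed.

Lemma evl_epsc G x y n w : uniq G -> inl (x, y) \in G ->
  evl G (epsc x y n) w = (eps x y w == n)%:R.
Proof.
move=> uG aG; have [-> _] := @supp_loc _ _ (suppl_epsc x y n) G uG aG.
rewrite big_seq1 /= /at1 eqxx mul1r indicE.
by case: eqP => H; [rewrite mem_set|rewrite memNset].
Qed.

Lemma Exl_repL G x y o1 o2 N : uniq G -> inl (x, y) \in G ->
  (forall r, (r < N)%N -> inr (x, y, r) \in G) ->
  Exl G (repL x y o1 o2 N) = TN (mval o1 o2) N.
Proof.
move=> uG aG HG; rewrite Exl_flat /TN big_seq [RHS]big_seq; apply: eq_bigr => n.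
rewrite mem_iota add0n ltnS => HnN.
rewrite (@Exl_mull G (pred1 (inl (x, y))) (rpred (x, y) n)).
- rewrite Exl_epsc // Exl_powl // => r Hr; apply: HG; exact: leq_trans Hr HnN.
- exact: suppl_epsc.
- exact: suppl_powl.
by move=> [[x' y']|[[x' y'] r]] /=; rewrite ?andbF.
Qed.

Lemma sum_collapse (h : nat -> R) k N :
  \sum_(n <- iota 0 N.+1) (k == n)%:R * h n = (k <= N)%:R * h k.
Proof.
case: (leqP k N) => Hk.
  rewrite (bigD1_seq k) ?iota_uniq ?mem_iota //= eqxx big1 ?addr0 // => n /negbTE.
  by rewrite eq_sym => ->; rewrite mul0r.
rewrite big_seq big1 ?mul0r // => n; rewrite mem_iota add0n ltnS => Hn.
have -> : (k == n) = false by apply/negbTE; rewrite neq_ltn (leq_ltn_trans Hn Hk) orbT.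
by rewrite mul0r.
Qed.

Definition phi x y o1 o2 (w : Omega) : R :=
  \prod_(0 <= r < eps x y w) (u1 ^+ zind x y r o1 w * u2 ^+ zind x y r o2 w).

Lemma evl_repL G x y o1 o2 N w : uniq G -> inl (x, y) \in G ->
  (forall r, (r < N)%N -> inr (x, y, r) \in G) -> okopt o1 -> okopt o2 ->
  evl G (repL x y o1 o2 N) w = (eps x y w <= N)%:R * phi x y o1 o2 w.
Proof.
move=> uG aG HG H1 H2; rewrite evl_flat.
rewrite -(sum_collapse (fun n => \prod_(0 <= r < n)
   (u1 ^+ zind x y r o1 w * u2 ^+ zind x y r o2 w))).
rewrite big_seq [RHS]big_seq; apply: eq_bigr => n.
rewrite mem_iota add0n ltnS => HnN.
rewrite evl_mull evl_epsc // evl_powl // => r Hr; apply: HG; exact: leq_trans Hr HnN.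
Qed.

Lemma abs_mul_le1 (a b : R) : `|a| <= 1 -> `|b| <= 1 -> `|a * b| <= 1.
Proof. by move=> Ha Hb; rewrite normrM mulr_ile1. Qed.

Lemma abs_prod_le1 (X : Type) (s : seq X) (f : X -> R) :
  (forall x, `|f x| <= 1) -> `|\prod_(x <- s) f x| <= 1.
Proof.
move=> H; elim: s => [|x s IH]; first by rewrite big_nil normr1.
by rewrite big_cons abs_mul_le1.
Qed.

Lemma abs_exp_le1 (u : R) n : -1 <= u <= 1 -> `|u ^+ n| <= 1.
Proof.
move=> /andP [H1 H2]; rewrite normrX exprn_ile1 //.
by rewrite ler_norml H1 H2.
Qed.

Lemma abs_nat_le1 (b : bool) : `|(b%:R : R)| <= 1.
Proof. by case: b; rewrite ?normr1 ?normr0. Qed.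

Lemma abs_phi x y o1 o2 w : `|phi x y o1 o2 w| <= 1.
Proof.
rewrite /phi; apply: abs_prod_le1 => r; apply: abs_mul_le1; exact: abs_exp_le1.
Qed.

Lemma Exl_bound G l : uniq G -> okl l -> (forall w, `|evl G l w| <= 1) ->
  `|Exl G l| <= 1.
Proof.
move=> uG Hl Hb; rewrite -lee_fin -abse_EFin -bridge //.
apply: (le_trans (le_abse_integral _ _ _)) => //.
  by apply/measurable_EFinP; exact: evl_meas.
apply: (@le_trans _ _ (\int[P]_w (cst 1%E w))%E).
  apply: ge0_le_integral => //.
  - apply: measurableT_comp => //; apply/measurable_EFinP; exact: evl_meas.
  - by move=> w _; rewrite abse_EFin lee_fin Hb.
by rewrite integral_cst //= mul1e probability_setT.
Qed.

Lemma abs_mval o1 o2 : okopt o1 -> okopt o2 -> `|mval o1 o2| <= 1.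
Proof.
move=> H1 H2; rewrite -(@Exl_gam [:: inr (0, 0, 0%N)] 0 0 0) ?mem_seq1 //.
apply: Exl_bound => //; first exact: okl_gam.
move=> w; rewrite evl_gam ?mem_seq1 //.
by apply: abs_mul_le1; apply: abs_exp_le1.
Qed.

Definition rep2 (m : R) N : seq cyl :=
  flatten [seq [:: (m ^+ n, at1 (inl (0, 0)) (eps 0 0 @^-1` [set n]))] | n <- iota 0 N.+1].

Lemma okl_rep2 m N : okl (rep2 m N).
Proof. apply: okl_flat => n; apply: okl_at1; exact: F_eps. Qed.

Lemma evl_rep2 m N w : evl [:: inl (0, 0)] (rep2 m N) w =
  (eps 0 0 w <= N)%:R * m ^+ eps 0 0 w.
Proof.
rewrite evl_flat -(sum_collapse (fun n => m ^+ n)); apply: eq_bigr => n _.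
have [-> _] := @supp_loc _ _ (suppl_at1 (inl (0, 0)) (m ^+ n) (eps 0 0 @^-1` [set n]))
   [:: inl (0, 0)] isT (mem_head _ _).
rewrite big_seq1 /= /at1 eqxx indicE mulrC.
by case: eqP => H; [rewrite mem_set|rewrite memNset].
Qed.

Lemma Exl_rep2 m N : Exl [:: inl (0, 0)] (rep2 m N) = TN m N.
Proof.
rewrite Exl_flat /TN; apply: eq_bigr => n _.
have [_ ->] := @supp_loc _ _ (suppl_at1 (inl (0, 0)) (m ^+ n) (eps 0 0 @^-1` [set n]))
   [:: inl (0, 0)] isT (mem_head _ _).
by rewrite big_seq1 /= /at1 eqxx mulrC.
Qed.

Lemma TN_cvg m : `|m| <= 1 -> TN m N @[N --> \oo] --> pgf_eps P eps m.
Proof.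
move=> Hm.
have Hm' : -1 <= m <= 1 by rewrite -ler_norml.
have H1 : forall N, measurable_fun setT (fun w => evl [:: inl (0, 0)] (rep2 m N) w).
  move=> N; exact: (evl_meas [:: inl (0, 0)] _ (okl_rep2 m N)).
have H2 : forall w, \forall N \near \oo,
    evl [:: inl (0, 0)] (rep2 m N) w = m ^+ eps 0 0 w.
  move=> w; apply: filterS (nbhs_infty_ge (eps 0 0 w)) => N HN.
  by rewrite evl_rep2 HN mul1r.
have H3 : forall N w, `|evl [:: inl (0, 0)] (rep2 m N) w| <= 1.
  move=> N w; rewrite evl_rep2; apply: abs_mul_le1; [exact: abs_nat_le1|exact: abs_exp_le1].
have [Hint Hc] := dct1 P _ _ H1 H2 H3.
have fin := integrable_fin_num measurableT Hint.
rewrite -(fineK fin) in Hc.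
have := fine_cvg Hc.
have -> : (fine \o (fun N => \int[P]_w (evl [:: inl (0, 0)] (rep2 m N) w)%:E)%E) = TN m.
  apply: funext => N /=; by rewrite bridge // ?Exl_rep2 //; exact: okl_rep2.
by move=> /(_ _); apply.
Qed.

Section Core.
Context (T : eqType) (lc : T -> int * int) (op1 op2 : T -> option (nat * nat))
  (Hok1 : forall e, okopt (op1 e)) (Hok2 : forall e, okopt (op2 e)).

Definition repE e N := repL (lc e).1 (lc e).2 (op1 e) (op2 e) N.

Definition repAll (ls : seq T) N : seq cyl :=
  foldr (fun e acc => mull (repE e N) acc) unitl ls.

Definition Gf (ls : seq T) N : seq inma_index :=
  undup ([seq inl ((lc e).1, (lc e).2) | e <- ls] ++
         [seq inr ((lc e).1, (lc e).2, r) | e <- ls, r <- iota 0 N]).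

Lemma Gf_inl ls N e : e \in ls -> inl ((lc e).1, (lc e).2) \in Gf ls N.
Proof. by move=> He; rewrite mem_undup mem_cat map_f. Qed.

Lemma Gf_inr ls N e r : e \in ls -> (r < N)%N -> inr ((lc e).1, (lc e).2, r) \in Gf ls N.
Proof.
move=> He Hr; rewrite mem_undup mem_cat; apply/orP; right.
apply: (allpairs_f (fun e r => inr ((lc e).1, (lc e).2, r))) => //.
by rewrite mem_iota.
Qed.

Lemma suppl_repAll ls N : suppl (fun a => loc a \in map lc ls) (repAll ls N).
Proof.
elim: ls => [|e ls IH] /=; first exact: suppl_unit.
apply: suppl_mull.
  apply: (suppl_sub _ _ _ _ (suppl_repL _ _ _ _ _)) => a /eqP ->.
  by rewrite -surjective_pairing mem_head.
apply: (suppl_sub _ _ _ _ IH) => a Ha; by rewrite in_cons Ha orbT.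
Qed.

Lemma okl_repAll ls N : okl (repAll ls N).
Proof.
elim: ls => [|e ls IH] /=; first exact: okl_unit.
apply: okl_mull => //; exact: okl_repL.
Qed.

Lemma Exl_repAll ls0 ls N : {subset ls <= ls0} -> uniq (map lc ls) ->
  Exl (Gf ls0 N) (repAll ls N) = \prod_(e <- ls) TN (mval (op1 e) (op2 e)) N.
Proof.
elim: ls => [|e ls IH] Hs Hu /=; first by rewrite Exl_unit big_nil.
move: Hu => /= /andP [He Hu].
have Hs' : {subset ls <= ls0} by move=> x Hx; apply: Hs; rewrite in_cons Hx orbT.
have He0 : e \in ls0 by apply: Hs; exact: mem_head.
rewrite (@Exl_mull _ (fun a => loc a == ((lc e).1, (lc e).2)) (fun a => loc a \in map lc ls)).
- rewrite IH // big_cons /repE Exl_repL ?undup_uniq ?Gf_inl // => r Hr.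
  exact: Gf_inr.
- exact: suppl_repL.
- exact: suppl_repAll.
move=> a; apply/negP => /andP [/eqP Ha]; rewrite Ha -surjective_pairing.
by move: He => /negP.
Qed.

Definition phiE e w := phi (lc e).1 (lc e).2 (op1 e) (op2 e) w.
Definition epsE e w := eps (lc e).1 (lc e).2 w.

Lemma evl_repAll ls0 ls N w : {subset ls <= ls0} ->
  evl (Gf ls0 N) (repAll ls N) w = \prod_(e <- ls) ((epsE e w <= N)%:R * phiE e w).
Proof.
elim: ls => [|e ls IH] Hs /=; first by rewrite evl_unit big_nil.
have Hs' : {subset ls <= ls0} by move=> x Hx; apply: Hs; rewrite in_cons Hx orbT.
have He0 : e \in ls0 by apply: Hs; exact: mem_head.
rewrite evl_mull IH // big_cons /repE evl_repL ?undup_uniq ?Gf_inl // => r Hr.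
exact: Gf_inr.
Qed.

Lemma cvg_bigprod (X : Type) (s : seq X) (a : X -> nat -> R) (A : X -> R) :
  (forall x, a x N @[N --> \oo] --> A x) ->
  (\prod_(x <- s) a x N) @[N --> \oo] --> \prod_(x <- s) A x.
Proof.
move=> H; elim: s => [|x s IH].
  rewrite big_nil; under eq_fun do rewrite big_nil; exact: cvg_cst.
rewrite big_cons; under eq_fun do rewrite big_cons.
exact: cvgM.
Qed.

Lemma core ls : uniq (map lc ls) ->
  (\int[P]_w (\prod_(e <- ls) phiE e w)%:E =
   (\prod_(e <- ls) pgf_eps P eps (mval (op1 e) (op2 e)))%:E)%E.
Proof.
move=> Hu.
have H1 : forall N, measurable_fun setT (fun w => evl (Gf ls N) (repAll ls N) w).
  move=> N; exact: (evl_meas _ _ (okl_repAll ls N)).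
have H2 : forall w, \forall N \near \oo,
    evl (Gf ls N) (repAll ls N) w = \prod_(e <- ls) phiE e w.
  move=> w; apply: filterS (nbhs_infty_ge (\max_(e <- ls) epsE e w)) => N HN.
  rewrite evl_repAll //; rewrite big_seq [RHS]big_seq; apply: eq_bigr => e He.
  suff -> : (epsE e w <= N)%N by rewrite mul1r.
  apply: leq_trans HN; exact: (@leq_bigmax_seq _ _ xpredT).
have H3 : forall N w, `|evl (Gf ls N) (repAll ls N) w| <= 1.
  move=> N w; rewrite evl_repAll //; apply: abs_prod_le1 => e.
  apply: abs_mul_le1; [exact: abs_nat_le1|exact: abs_phi].
have [_ Hc] := dct1 P _ _ H1 H2 H3.
have HE : (fun N => \int[P]_w (evl (Gf ls N) (repAll ls N) w)%:E)%E =
          (fun N => (\prod_(e <- ls) TN (mval (op1 e) (op2 e)) N)%:E).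
  apply: funext => N; rewrite bridge ?undup_uniq ?Exl_repAll //.
  exact: okl_repAll.
rewrite HE in Hc.
have Hc2 : (fun N => (\prod_(e <- ls) TN (mval (op1 e) (op2 e)) N)%:E) @ \oo -->
   (\prod_(e <- ls) pgf_eps P eps (mval (op1 e) (op2 e)))%:E.
  apply: cvg_EFin; first by near=> N.
  have -> : (fine \o (fun N => (\prod_(e <- ls) TN (mval (op1 e) (op2 e)) N)%:E)) =
     (fun N => \prod_(e <- ls) TN (mval (op1 e) (op2 e)) N) by [].
  apply: cvg_bigprod => e; apply: TN_cvg; exact: abs_mval.
exact: (cvg_unique _ Hc Hc2).
Unshelve. all: by end_near.
Qed.

End Core.

Context (k l : nat) (Hk : (k <= q1)%N) (Hl : (l <= q2)%N) (s t : int)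
  (beta : nat -> nat -> R)
  (Hbern : forall i j, (i <= q1)%N -> (j <= q2)%N ->
      P [set w | Z 0 0 0%N w i j] = (beta i j)%:E).

Definition lcK (e : nat * nat) : int * int := (s - e.1%:Z, t - e.2%:Z).
Definition op1K (e : nat * nat) : option (nat * nat) :=
  if (e.1 <= q1)%N && (e.2 <= q2)%N then Some e else None.
Definition op2K (e : nat * nat) : option (nat * nat) :=
  if [&& (k <= e.1)%N, (l <= e.2)%N, (e.1 - k <= q1)%N & (e.2 - l <= q2)%N]
  then Some (e.1 - k, e.2 - l)%N else None.
Definition lsK : seq (nat * nat) :=
  [seq (a, b) | a <- iota 0 (q1 + k).+1, b <- iota 0 (q2 + l).+1].

Lemma ok1K e : okopt (op1K e).
Proof. case: e => a b; rewrite /op1K; case: ifP => [H|//]; exact: H. Qed.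

Lemma ok2K e : okopt (op2K e).
Proof.
case: e => a b; rewrite /op2K; case: ifP => [H|//] /=.
by case/and4P: H => _ _ -> ->.
Qed.

Lemma uniqK : uniq (map lcK lsK).
Proof.
rewrite map_inj_uniq.
  apply: allpairs_uniq; [exact: iota_uniq|exact: iota_uniq|].
  by move=> [? ?] [? ?] _ _.
move=> [a b] [a' b'] [] H1 H2.
have -> : a = a' by move: H1 => /addrI /oppr_inj [].
by have -> : b = b' by move: H2 => /addrI /oppr_inj [].
Qed.

Lemma op1K_S a b : (a <= q1)%N -> (b <= q2)%N -> op1K (a, b) = Some (a, b).
Proof. by rewrite /op1K /= => -> ->. Qed.

Lemma op1K_N a b : (q1 < a)%N || (q2 < b)%N -> op1K (a, b) = None.
Proof.
rewrite /op1K /= => H; case: ifP => // /andP [H1 H2].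
by move: H; rewrite ltnNge H1 ltnNge H2.
Qed.

Lemma op2K_S a b : (k <= a)%N -> (l <= b)%N -> (a <= q1 + k)%N -> (b <= q2 + l)%N ->
  op2K (a, b) = Some (a - k, b - l)%N.
Proof.
rewrite /op2K /= => H1 H2 H3 H4.
by rewrite H1 H2 leq_subLR addnC H3 leq_subLR addnC H4.
Qed.

Lemma op2K_N a b : (a < k)%N || (b < l)%N -> op2K (a, b) = None.
Proof.
rewrite /op2K /= => H; case: ifP => // /and4P [H1 H2 _ _].
by move: H; rewrite ltnNge H1 ltnNge H2.
Qed.

Lemma exp_sum (X : Type) (r : seq X) (f : X -> nat) (u : R) :
  u ^+ (\sum_(x <- r) f x)%N = \prod_(x <- r) u ^+ f x.
Proof.
elim: r => [|x r IH]; first by rewrite !big_nil expr0.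
by rewrite !big_cons exprD IH.
Qed.

Lemma prod_iota (G : nat -> R) n : \prod_(i <- iota 0 n) G i = \prod_(0 <= i < n) G i.
Proof. by rewrite /index_iota subn0. Qed.

Lemma prod_ext_iota (G : nat -> R) A A' : (A <= A')%N ->
  (forall i, (A <= i)%N -> (i < A')%N -> G i = 1) ->
  \prod_(i <- iota 0 A') G i = \prod_(i <- iota 0 A) G i.
Proof.
move=> HA H; rewrite -(subnKC HA) iotaD big_cat /= add0n.
have -> : \prod_(i <- iota A (A' - A)) G i = 1; last by rewrite mulr1.
rewrite big_seq big1 // => i; rewrite mem_iota => /andP [H1 H2].
by apply: H => //; rewrite -(subnKC HA).
Qed.

Lemma prod_shift (G : nat -> R) k' n : (forall i, (i < k')%N -> G i = 1) ->
  \prod_(i <- iota 0 (k' + n)) G i = \prod_(i <- iota 0 n) G (k' + i)%N.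
Proof.
move=> H; rewrite iotaD big_cat /= add0n.
have -> : \prod_(i <- iota 0 k') G i = 1.
  by rewrite big_seq big1 // => i; rewrite mem_iota add0n => /andP [_]; exact: H.
by rewrite mul1r -[k']addn0 iotaDl big_map addn0.
Qed.

Lemma prod_nat1 (G : nat -> R) m n : (forall i, (m <= i < n)%N -> G i = 1) ->
  \prod_(m <= i < n) G i = 1.
Proof. by move=> H; rewrite (eq_big_nat _ _ H) big1_eq. Qed.

Lemma zind_None x y r w : zind x y r None w = false.
Proof. by []. Qed.

Lemma lhsK w :
  u1 ^+ inma_X q1 q2 eps Z s t w * u2 ^+ inma_X q1 q2 eps Z (s - k%:Z) (t - l%:Z) w =
  \prod_(e <- lsK) phiE _ lcK op1K op2K e w.
Proof.
rewrite /phiE /phi; under eq_bigr do rewrite big_split; rewrite big_split /=.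
congr (_ * _).
- rewrite /inma_X exp_sum /lsK big_allpairs.
  rewrite (@prod_ext_iota _ q1.+1 (q1 + k).+1); last 2 first.
  + lia.
  + move=> i Hi _; rewrite big_seq big1 // => j _; rewrite big1 // => r _.
    by rewrite op1K_N ?Hi // expr0.
  rewrite prod_iota; apply: eq_big_nat => i /andP [_ Hi].
  rewrite exp_sum (@prod_ext_iota _ q2.+1 (q2 + l).+1); last 2 first.
  + lia.
  + move=> j Hj _; rewrite big1 // => r _.
    by rewrite op1K_N ?Hj ?orbT // expr0.
  rewrite prod_iota; apply: eq_big_nat => j /andP [_ Hj].
  rewrite exp_sum /= op1K_S // big_mkord; apply: eq_bigr => r _ //.
- rewrite /inma_X exp_sum /lsK big_allpairs.
  have E1 : (q1 + k).+1 = (k + q1.+1)%N by rewrite addnS addnC.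
  have E2 : (q2 + l).+1 = (l + q2.+1)%N by rewrite addnS addnC.
  rewrite E1 E2 prod_shift; last first.
    move=> i Hi; rewrite big_seq big1 // => j _; rewrite big1 // => r _.
    by rewrite op2K_N ?Hi // expr0.
  rewrite prod_iota; apply: eq_big_nat => i /andP [_ Hi].
  rewrite exp_sum prod_shift; last first.
    move=> j Hj; rewrite big1 // => r _.
    by rewrite op2K_N ?Hj ?orbT // expr0.
  rewrite prod_iota; apply: eq_big_nat => j /andP [_ Hj].
  rewrite exp_sum /= op2K_S ?leq_addr //; last 2 first.
  + lia.
  + lia.
  rewrite !addKn big_mkord.
  have -> : s - (k + i)%:Z = s - k%:Z - i%:Z by rewrite PoszD opprD addrA.
  by have -> : t - (l + j)%:Z = t - l%:Z - j%:Z by rewrite PoszD opprD addrA.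
Qed.

Lemma zsetN x y r : zset x y r None = set0.
Proof. by rewrite /zset /= preimage_set0. Qed.

Lemma zsetS i j : (i <= q1)%N -> (j <= q2)%N ->
  zset 0 0 0 (Some (i, j)) = [set w | Z 0 0 0%N w i j].
Proof.
move=> Hi Hj; apply: funext => w; apply: propext.
exact: (zsetE 0 0 0 (Some (i, j)) w (introT andP (conj Hi Hj))).
Qed.

Lemma prS i j : (i <= q1)%N -> (j <= q2)%N -> pr (zset 0 0 0 (Some (i, j))) = beta i j.
Proof. by move=> Hi Hj; rewrite zsetS // /pr Hbern. Qed.

Lemma prSS i j i' j' : (i <= q1)%N -> (j <= q2)%N -> (i' <= q1)%N -> (j' <= q2)%N ->
  pr (zset 0 0 0 (Some (i, j)) `&` zset 0 0 0 (Some (i', j'))) = pZ P Z i j i' j'.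
Proof.
move=> *; rewrite !zsetS // /pr /pZ; congr (fine (P _)).
apply: funext => w; apply: propext => /=.
by split => [[H1 H2]|/andP [H1 H2]] //; apply/andP.
Qed.

Lemma mNN : mval None None = 1.
Proof. rewrite /mval !zsetN setI0 /pr measure0 /=; ring. Qed.

Lemma mSN i j : (i <= q1)%N -> (j <= q2)%N ->
  mval (Some (i, j)) None = 1 + beta i j * (u1 - 1).
Proof. move=> Hi Hj; rewrite /mval !zsetN setI0 prS // /pr measure0 /=; ring. Qed.

Lemma mNS i j : (i <= q1)%N -> (j <= q2)%N ->
  mval None (Some (i, j)) = 1 + beta i j * (u2 - 1).
Proof. move=> Hi Hj; rewrite /mval !zsetN set0I prS // /pr measure0 /=; ring. Qed.

Lemma mSS i j i' j' : (i <= q1)%N -> (j <= q2)%N -> (i' <= q1)%N -> (j' <= q2)%N ->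
  mval (Some (i, j)) (Some (i', j')) =
  1 + beta i j * (u1 - 1) + beta i' j' * (u2 - 1) + pZ P Z i j i' j' * (u1 - 1) * (u2 - 1).
Proof. move=> *; rewrite /mval prSS // !prS //; ring. Qed.

Lemma pgf1 : pgf_eps P eps 1 = 1.
Proof.
rewrite /pgf_eps; under eq_integral do rewrite expr1n.
by rewrite integral_cst //= probability_setT mul1e.
Qed.

Lemma rhsK :
  \prod_(e <- lsK) pgf_eps P eps (mval (op1K e) (op2K e)) =
    (\prod_(0 <= i < k) \prod_(0 <= j < q2.+1)
         pgf_eps P eps (1 + beta i j * (u1 - 1)))
    * (\prod_(k <= i < q1.+1) \prod_(0 <= j < l)
         pgf_eps P eps (1 + beta i j * (u1 - 1)))
    * (\prod_(q1.+1 <= i < (q1 + k).+1) \prod_(l <= j < (q2 + l).+1)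
         pgf_eps P eps (1 + beta (i - k)%N (j - l)%N * (u2 - 1)))
    * (\prod_(k <= i < q1.+1) \prod_(q2.+1 <= j < (q2 + l).+1)
         pgf_eps P eps (1 + beta (i - k)%N (j - l)%N * (u2 - 1)))
    * (\prod_(k <= i < q1.+1) \prod_(l <= j < q2.+1)
         pgf_eps P eps (1 + beta i j * (u1 - 1) + beta (i - k)%N (j - l)%N * (u2 - 1)
                        + pZ P Z i j (i - k)%N (j - l)%N * (u1 - 1) * (u2 - 1))).
Proof.
rewrite /lsK big_allpairs prod_iota.
under eq_bigr do rewrite prod_iota.
set H := fun a b => pgf_eps P eps (mval (op1K (a, b)) (op2K (a, b))).
rewrite (@big_cat_nat _ _ _ k 0 (q1 + k).+1) //=; try lia.
rewrite (@big_cat_nat _ _ _ q1.+1 k (q1 + k).+1) //=; try lia.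
have A1 : \prod_(0 <= a < k) \prod_(0 <= b < (q2 + l).+1) H a b =
    \prod_(0 <= i < k) \prod_(0 <= j < q2.+1) pgf_eps P eps (1 + beta i j * (u1 - 1)).
  apply: eq_big_nat => a /andP [_ Ha].
  rewrite (@big_cat_nat _ _ _ q2.+1 0 (q2 + l).+1) //=; try lia.
  rewrite [X in _ * X]prod_nat1 ?mulr1; last first.
    move=> b /andP [Hb _]; rewrite /H op1K_N ?Hb ?orbT // op2K_N ?Ha // mNN pgf1 //.
  apply: eq_big_nat => b /andP [_ Hb]; rewrite /H op1K_S ?op2K_N ?Ha ?mSN //; lia.
have A3 : \prod_(q1.+1 <= a < (q1 + k).+1) \prod_(0 <= b < (q2 + l).+1) H a b =
    \prod_(q1.+1 <= i < (q1 + k).+1) \prod_(l <= j < (q2 + l).+1)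
         pgf_eps P eps (1 + beta (i - k)%N (j - l)%N * (u2 - 1)).
  apply: eq_big_nat => a /andP [Ha1 Ha2].
  rewrite (@big_cat_nat _ _ _ l 0 (q2 + l).+1) //=; try lia.
  rewrite [X in X * _]prod_nat1 ?mul1r; last first.
    move=> b /andP [_ Hb]; rewrite /H op1K_N ?Ha1 // op2K_N ?Hb ?orbT // mNN pgf1 //.
  apply: eq_big_nat => b /andP [Hb1 Hb2].
  rewrite /H op1K_N ?Ha1 // op2K_S ?mNS //; lia.
have A2 : \prod_(k <= a < q1.+1) \prod_(0 <= b < (q2 + l).+1) H a b =
    (\prod_(k <= i < q1.+1) \prod_(0 <= j < l)
         pgf_eps P eps (1 + beta i j * (u1 - 1)))
    * (\prod_(k <= i < q1.+1) \prod_(l <= j < q2.+1)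
         pgf_eps P eps (1 + beta i j * (u1 - 1) + beta (i - k)%N (j - l)%N * (u2 - 1)
                        + pZ P Z i j (i - k)%N (j - l)%N * (u1 - 1) * (u2 - 1)))
    * (\prod_(k <= i < q1.+1) \prod_(q2.+1 <= j < (q2 + l).+1)
         pgf_eps P eps (1 + beta (i - k)%N (j - l)%N * (u2 - 1))).
  rewrite -!big_split /=; apply: eq_big_nat => a /andP [Ha1 Ha2].
  rewrite (@big_cat_nat _ _ _ l 0 (q2 + l).+1) //=; try lia.
  rewrite (@big_cat_nat _ _ _ q2.+1 l (q2 + l).+1) //=; try lia.
  rewrite mulrA; congr (_ * _ * _).
  - apply: eq_big_nat => b /andP [_ Hb].
    rewrite /H op1K_S ?op2K_N ?Hb ?orbT ?mSN //; lia.
  - apply: eq_big_nat => b /andP [Hb1 Hb2].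
    rewrite /H op1K_S ?op2K_S ?mSS //; lia.
  - apply: eq_big_nat => b /andP [Hb1 Hb2].
    rewrite /H op1K_N ?op2K_S ?mNS //; try lia.
rewrite A1 A2 A3; ring.
Qed.

Lemma final :
  (\int[P]_w (u1 ^+ inma_X q1 q2 eps Z s t w
              * u2 ^+ inma_X q1 q2 eps Z (s - k%:Z) (t - l%:Z) w)%:E
   = ((\prod_(0 <= i < k) \prod_(0 <= j < q2.+1)
         pgf_eps P eps (1 + beta i j * (u1 - 1)))
    * (\prod_(k <= i < q1.+1) \prod_(0 <= j < l)
         pgf_eps P eps (1 + beta i j * (u1 - 1)))
    * (\prod_(q1.+1 <= i < (q1 + k).+1) \prod_(l <= j < (q2 + l).+1)
         pgf_eps P eps (1 + beta (i - k)%N (j - l)%N * (u2 - 1)))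
    * (\prod_(k <= i < q1.+1) \prod_(q2.+1 <= j < (q2 + l).+1)
         pgf_eps P eps (1 + beta (i - k)%N (j - l)%N * (u2 - 1)))
    * (\prod_(k <= i < q1.+1) \prod_(l <= j < q2.+1)
         pgf_eps P eps (1 + beta i j * (u1 - 1) + beta (i - k)%N (j - l)%N * (u2 - 1)
                        + pZ P Z i j (i - k)%N (j - l)%N * (u1 - 1) * (u2 - 1))))%:E)%E.
Proof.
under eq_integral do rewrite lhsK.
by rewrite (core _ _ _ _ ok1K ok2K _ uniqK) rhsK.
Qed.

End Main.

Theorem theorem1 (R : realType) (d : measure_display) (Omega : measurableType d)
  (P : probability Omega R) (q1 q2 : nat) (beta : nat -> nat -> R)
  (eps : int -> int -> Omega -> nat)
  (Z : int -> int -> nat -> Omega -> nat -> nat -> bool) :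
  (1 <= q1 + q2)%N ->
  (forall i j, (i <= q1)%N -> (j <= q2)%N -> 0 <= beta i j <= 1) ->
  (* measurability of all the random elements *)
  (forall s t (B : set nat), measurable (eps s t @^-1` B)) ->
  (forall s t r (B : set {ffun 'I_q1.+1 * 'I_q2.+1 -> bool}),
      measurable (Zvec q1 q2 Z s t r @^-1` B)) ->
  (* eps_{s,t} identically distributed, with finite mean and finite variance *)
  (forall s t (B : set nat), P (eps s t @^-1` B) = P (eps 0 0 @^-1` B)) ->
  (\int[P]_w ((eps 0 0 w)%:R : R)%:E < +oo)%E ->
  (\int[P]_w (((eps 0 0 w)%:R : R) ^+ 2)%:E < +oo)%E ->
  (* Z_{s,t;r} identically distributed *)
  (forall s t r (B : set {ffun 'I_q1.+1 * 'I_q2.+1 -> bool}),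
      P (Zvec q1 q2 Z s t r @^-1` B) = P (Zvec q1 q2 Z 0 0 0 @^-1` B)) ->
  (* Bernoulli(beta_ij) components *)
  (forall i j, (i <= q1)%N -> (j <= q2)%N ->
      P [set w | Z 0 0 0%N w i j] = (beta i j)%:E) ->
  (* all eps_{s,t} and all Z_{s,t;r} are mutually independent *)
  mutually_independent P (inma_events q1 q2 eps Z) ->
  forall (k l : nat), (k <= q1)%N -> (l <= q2)%N ->
  forall (s t : int) (u1 u2 : R), -1 <= u1 <= 1 -> -1 <= u2 <= 1 ->
  (\int[P]_w (u1 ^+ inma_X q1 q2 eps Z s t w
              * u2 ^+ inma_X q1 q2 eps Z (s - k%:Z) (t - l%:Z) w)%:E
   = ((\prod_(0 <= i < k) \prod_(0 <= j < q2.+1)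
         pgf_eps P eps (1 + beta i j * (u1 - 1)))
    * (\prod_(k <= i < q1.+1) \prod_(0 <= j < l)
         pgf_eps P eps (1 + beta i j * (u1 - 1)))
    * (\prod_(q1.+1 <= i < (q1 + k).+1) \prod_(l <= j < (q2 + l).+1)
         pgf_eps P eps (1 + beta (i - k)%N (j - l)%N * (u2 - 1)))
    * (\prod_(k <= i < q1.+1) \prod_(q2.+1 <= j < (q2 + l).+1)
         pgf_eps P eps (1 + beta (i - k)%N (j - l)%N * (u2 - 1)))
    * (\prod_(k <= i < q1.+1) \prod_(l <= j < q2.+1)
         pgf_eps P eps (1 + beta i j * (u1 - 1) + beta (i - k)%N (j - l)%N * (u2 - 1)
                        + pZ P Z i j (i - k)%N (j - l)%N * (u1 - 1) * (u2 - 1))))%:E)%E.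
Proof.
move=> _ _ Hmeps HmZ Heps _ _ HZd Hbern Hind k l Hk Hl s t u1 u2 Hu1 Hu2.
exact: final.
Qed.
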